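(* For every $m\ge3$, the $m$-candidate plurality rule (score vector $(1,0,\dots,0)$) is dominated by some other $m$-candidate positional rule; indeed it is dominated both by the anti-plurality rule (score vector $(1,\dots,1,0)$) and by Borda's rule (score vector $w_i=(m-i)/(m-1)$).
   Context: For an $m$-candidate positional rule with score vector $w=(w_1,\dots,w_m)$, $1=w_1\ge\cdots\ge w_m=0$, let $\bar w=\frac1m\sum_iw_i$, $\sigma_w^2=\frac1m\sum_iw_i^2-\bar w^2$, $M_w=\{(\lambda,\mu):0\le\lambda\le\mu,\ w_{i+1}\lambda+(1-w_i)\mu\le1,\ i=1,\dots,m-1\}$, and $V_w=\sup\{\lambda(\rho_1(Z)-\bar Z)+\mu(\bar Z-\rho_2(Z)):(\lambda,\mu)\in\sigma_w(\frac{m}{m-1})^{1/2}M_w\}\in[0,\infty]$, where $Z=(Z_1,\dots,Z_m)$ has independent standard normal entries, $\bar Z$ is their mean and $\rho_j(Z)$ the $j$-th largest entry. (Under Impartial Culture, $V_w$ is the limiting distribution of the minimum manipulating coalition size divided by $\sqrt n$.) Let $g_w(v)=\mathbb P(V_w\le v)$. A rule $w$ dominates a rule $w'$ if $g_w(v)\le g_{w'}(v)$ for all $v\ge0$. *)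

(* Defs.v *)
From HB Require Import structures.
From mathcomp Require Import all_boot all_order all_algebra.
From mathcomp Require Import all_classical all_reals all_analysis.
Set Implicit Arguments. Unset Strict Implicit. Unset Printing Implicit Defensive.
Import Order.TTheory GRing.Theory Num.Theory.
Local Open Scope classical_set_scope.
Local Open Scope ring_scope.

Section Defs.
Variable R : realType.

(* A score vector w = (w_1,...,w_m) is encoded as w : 'I_m -> R with
   w i = w_{i+1}. *)
Definition positional_rule (m : nat) (w : 'I_m -> R) : Prop :=
  (0 < m)%N /\
  (forall i : 'I_m, val i = 0%N -> w i = 1) /\
  (forall i : 'I_m, val i = m.-1 -> w i = 0) /\
  (forall i j : 'I_m, (i <= j)%N -> w j <= w i).

Definition plurality (m : nat) : 'I_m -> R :=
  fun i => if val i == 0%N then 1 else 0.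
Definition antiplurality (m : nat) : 'I_m -> R :=
  fun i => if val i == m.-1 then 0 else 1.
(* w_i = (m - i)/(m - 1), i.e. for index k = i - 1 : (m - 1 - k)/(m - 1). *)
Definition borda (m : nat) : 'I_m -> R :=
  fun i => (m.-1 - val i)%N%:R / (m.-1)%:R.

Definition wbar (m : nat) (w : 'I_m -> R) : R := (\sum_i w i) / m%:R.
Definition sigma2 (m : nat) (w : 'I_m -> R) : R :=
  (\sum_i w i ^+ 2) / m%:R - wbar w ^+ 2.
Definition sigmaw (m : nat) (w : 'I_m -> R) : R := Num.sqrt (sigma2 w).

Definition Mset (m : nat) (w : 'I_m -> R) : set (R * R) :=
  [set p | 0 <= p.1 /\ p.1 <= p.2 /\
     forall i : 'I_m, forall Hi : ((val i).+1 < m)%N,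
       w (Ordinal Hi) * p.1 + (1 - w i) * p.2 <= 1].

Definition scaledM (m : nat) (w : 'I_m -> R) : set (R * R) :=
  let c := sigmaw w * Num.sqrt (m%:R / (m.-1)%:R) in
  [set p | exists2 q, Mset w q & p = (c * q.1, c * q.2)].

(* j-th largest entry of z (j >= 1), counted with multiplicity *)
Definition rho (m : nat) (j : nat) (z : 'I_m -> R) : R :=
  nth 0 (sort (fun a b => b <= a) [seq z i | i <- enum 'I_m]) j.-1.

Definition zbar (m : nat) (z : 'I_m -> R) : R := (\sum_i z i) / m%:R.

(* the random quantity V_w as a function of the realisation z of Z *)
Definition Vw (m : nat) (w : 'I_m -> R) (z : 'I_m -> R) : \bar R :=
  ereal_sup [set ((p.1 * (rho 1 z - zbar z) + p.2 * (zbar z - rho 2 z))%:E)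
            | p in scaledM w].

Definition iid_std_normal (d : measure_display) (T : measurableType d)
  (P : probability T R) (m : nat) (Z : 'I_m -> T -> R) : Prop :=
  (forall i, measurable_fun setT (Z i)) /\
  (forall i (B : set R), measurable B ->
      P (Z i @^-1` B) = normal_prob 0 1 B) /\
  (forall B : 'I_m -> set R, (forall i, measurable (B i)) ->
      P (\bigcap_(i in [set: 'I_m]) (Z i @^-1` B i)) =
      (\prod_(i < m) P (Z i @^-1` B i))%E).

Definition gw (d : measure_display) (T : measurableType d)
  (P : probability T R) (m : nat) (Z : 'I_m -> T -> R) (w : 'I_m -> R)
  (v : R) : \bar R :=
  P [set t | (Vw w (fun i => Z i t) <= v%:E)%E].

Definition dominates (d : measure_display) (T : measurableType d)
  (P : probability T R) (m : nat) (Z : 'I_m -> T -> R) (w w' : 'I_m -> R)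
  : Prop :=
  forall v : R, 0 <= v -> (gw P Z w v <= gw P Z w' v)%E.

End Defs.
Arguments plurality R m : clear implicits.
Arguments antiplurality R m : clear implicits.
Arguments borda R m : clear implicits.

(* Main.v *)
Require Import Defs.
From HB Require Import structures.
From mathcomp Require Import all_boot all_order all_algebra.
From mathcomp Require Import all_classical all_reals all_analysis.
From mathcomp Require Import ring lra.
Set Implicit Arguments. Unset Strict Implicit. Unset Printing Implicit Defensive.
Import Order.TTheory GRing.Theory Num.Theory.
Local Open Scope classical_set_scope.
Local Open Scope ring_scope.

Lemma rho12 (R : realType) (m : nat) (z : 'I_m -> R) : (1 < m)%N ->
  exists i j, i != j /\ rho 1 z = z i /\ rho 2 z = z j /\
    (forall k, z k <= z i) /\ (forall k, k != i -> z k <= z j).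
Proof.
move=> m1.
set s := sort (fun a b : R => b <= a) [seq z i | i <- enum 'I_m].
have Hp : perm_eq s [seq z i | i <- enum 'I_m].
  by rewrite /s perm_sort; exact: perm_refl.
have Hsz : size s = m by rewrite (perm_size Hp) size_map size_enum_ord.
have Hsort : sorted (fun a b : R => b <= a) s.
  by apply: sort_sorted => a b; exact: le_total.
have Htr : transitive (fun a b : R => b <= a).
  by move=> a b c hab hbc; exact: (le_trans hbc hab).
rewrite /rho -/s.
case Es: s Hsz Hsort Hp => [|x0 [|x1 r]] //=; [by move=> h; rewrite -h in m1|
  by move=> h; rewrite -h in m1|].
move=> _ /andP[h01 hp1] Hp.
have hr := order_path_min Htr hp1.
have : x0 \in [seq z i | i <- enum 'I_m] by rewrite -(perm_mem Hp) mem_head.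
case/mapP=> i ie Ex0; subst x0.
have Hu : uniq (enum 'I_m) := enum_uniq _.
have H2 : perm_eq (z i :: x1 :: r) (z i :: [seq z k | k <- rem i (enum 'I_m)]).
  apply: (perm_trans Hp).
  by rewrite -map_cons; apply: perm_map; exact: perm_to_rem.
rewrite perm_cons in H2.
have : x1 \in [seq z k | k <- rem i (enum 'I_m)] by rewrite -(perm_mem H2) mem_head.
case/mapP=> j je Ex1; subst x1.
have Hrem : forall k, k != i -> z k \in z j :: r.
  move=> k ki; rewrite (perm_mem H2); apply: map_f.
  by rewrite (mem_rem_uniq _ Hu) inE ki mem_enum.
exists i, j; split; last split => //; last split => //; last split.
- by move: je; rewrite (mem_rem_uniq _ Hu) inE eq_sym => /andP[].
- move=> k; have [->|ki] := eqVneq k i; first by [].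
  move: (Hrem k ki); rewrite inE => /orP[/eqP->//|kr].
  by apply: le_trans h01; move/allP: hr => /(_ _ kr).
- move=> k ki; move: (Hrem k ki); rewrite inE => /orP[/eqP->//|kr].
  by move/allP: hr => /(_ _ kr).
Qed.

Section S.
Variable R : realType.

Definition cw (m : nat) (w : 'I_m -> R) : R :=
  sigmaw w * Num.sqrt (m%:R / (m.-1)%:R).

Arguments cw : simpl never.

Lemma cw_ge0 m (w : 'I_m -> R) : 0 <= cw w.
Proof. by rewrite /cw mulr_ge0 ?sqrtr_ge0. Qed.

Lemma a_ge0 m (z : 'I_m -> R) : (1 < m)%N -> 0 <= rho 1 z - zbar z.
Proof.
move=> m1; have [i [j [_ [-> [_ [Hi _]]]]]] := rho12 z m1.
rewrite subr_ge0 /zbar ler_pdivrMr ?ltr0n ?(ltn_trans _ m1) //.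
have -> : z i * m%:R = \sum_(k < m) z i by rewrite sumr_const card_ord mulr_natr.
by apply: ler_sum => k _; exact: Hi.
Qed.

Lemma D_ge0 m (z : 'I_m -> R) : (1 < m)%N -> 0 <= rho 1 z - rho 2 z.
Proof.
move=> m1; have [i [j [ij [-> [-> [Hi _]]]]]] := rho12 z m1.
by rewrite subr_ge0.
Qed.

Lemma alg (q1 q2 K a b : R) : 0 <= q1 -> q1 <= q2 -> 0 <= a -> 0 <= a + b ->
  (q2 <= K \/ (b <= 0 /\ q1 <= K)) -> q1 * a + q2 * b <= K * (a + b).
Proof.
move=> h1 h12 ha hab [hK|[hb hK]].
- have [hb|hb] := lerP 0 b; first by nra.
  by nra.
- by nra.
Qed.

Lemma Vw_box m (w : 'I_m -> R) (K v : R) (z : 'I_m -> R) : (1 < m)%N ->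
  (forall q, Mset w q -> q.2 <= K) -> Mset w (K, K) ->
  ((Vw w z <= v%:E)%E <-> cw w * K * (rho 1 z - rho 2 z) <= v).
Proof.
move=> m1 HM HK; split.
- move=> H; rewrite -lee_fin; apply: (le_trans _ H).
  apply: ereal_sup_ubound; exists (cw w * K, cw w * K).
    by exists (K, K).
  by congr (_%:E); rewrite /=; ring.
- move=> H; apply: ge_ereal_sup => x [p [q Mq ->] <-] /=; rewrite lee_fin -/(cw w).
  apply: le_trans H.
  have h := a_ge0 z m1; have hD := D_ge0 z m1.
  have hq1 := HM _ Mq.
  case: Mq => [h1 [h12 _]].
  have Hal : q.1 * (rho 1 z - zbar z) + q.2 * (zbar z - rho 2 z) <= K * (rho 1 z - rho 2 z).
    have -> : rho 1 z - rho 2 z = (rho 1 z - zbar z) + (zbar z - rho 2 z) by ring.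
    apply: alg h1 h12 h _ _; first by have -> : (rho 1 z - zbar z) + (zbar z - rho 2 z) = rho 1 z - rho 2 z by ring.
    by left.
  have Hc := cw_ge0 w; nra.
Qed.

Lemma Vw_anti m (w : 'I_m -> R) (v : R) (z : 'I_m -> R) : (1 < m)%N ->
  (forall q, Mset w q -> q.1 <= 1) -> Mset w (1, 1) ->
  (forall N, 0 <= N -> Mset w (0, N)) -> 0 < cw w ->
  ((Vw w z <= v%:E)%E <-> zbar z <= rho 2 z /\ cw w * (rho 1 z - rho 2 z) <= v).
Proof.
move=> m1 HM H1 HN cpos; split.
- move=> H; split; last first.
    rewrite -lee_fin; apply: (le_trans _ H).
    apply: ereal_sup_ubound; exists (cw w, cw w).
      by exists (1, 1) => //=; rewrite !mulr1.
    by congr (_%:E); rewrite /=; ring.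
  rewrite leNgt; apply/negP => hb.
  set b := zbar z - rho 2 z.
  have bpos : 0 < b by rewrite subr_gt0.
  set N := (`|v| + 1) / (cw w * b).
  have N0 : 0 <= N by rewrite /N divr_ge0 // ?addr_ge0 // mulr_ge0 // ltW.
  have : ((0 * (rho 1 z - zbar z) + (cw w * N) * b)%:E <= v%:E)%E.
    apply: (le_trans _ H); apply: ereal_sup_ubound; exists (0, cw w * N) => //.
    by exists (0, N); [exact: HN | rewrite /= mulr0].
  rewrite lee_fin mul0r add0r.
  have -> : cw w * N * b = `|v| + 1.
    by rewrite /N; field; rewrite !gt_eqF.
  by move=> h'; have := le_trans h' (ler_norm v); rewrite gerDl ler10.
- move=> [hb H]; apply: ge_ereal_sup => x [p [q Mq ->] <-] /=; rewrite lee_fin -/(cw w).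
  apply: le_trans H.
  have h := a_ge0 z m1; have hD := D_ge0 z m1.
  have hq1 := HM _ Mq.
  case: Mq => [h1 [h12 _]].
  have Hal : q.1 * (rho 1 z - zbar z) + q.2 * (zbar z - rho 2 z) <= 1 * (rho 1 z - rho 2 z).
    have -> : rho 1 z - rho 2 z = (rho 1 z - zbar z) + (zbar z - rho 2 z) by ring.
    apply: alg h1 h12 h _ _; first by have -> : (rho 1 z - zbar z) + (zbar z - rho 2 z) = rho 1 z - rho 2 z by ring.
    by right; split => //; rewrite subr_le0.
  have Hc := cw_ge0 w; nra.
Qed.

End S.

Section Meas.
Variables (R : realType) (d : measure_display) (T : measurableType d).

Lemma mle (f g : T -> R) : measurable_fun setT f -> measurable_fun setT g ->
  measurable [set x | f x <= g x].
Proof. by move=> hf hg; rewrite -[X in measurable X]setTI; exact: measurable_fun_le. Qed.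

Variables (m : nat) (Z : 'I_m -> T -> R).
Hypothesis HZ : forall i, measurable_fun setT (Z i).
Hypothesis m1 : (1 < m)%N.

Lemma meas_D u : measurable [set t | rho 1 (fun i => Z i t) - rho 2 (fun i => Z i t) <= u].
Proof.
have -> : [set t | rho 1 (fun i => Z i t) - rho 2 (fun i => Z i t) <= u] =
  \bigcap_(i in [set: 'I_m]) \bigcup_(j in [set j | j != i]) [set t | Z i t - Z j t <= u].
  apply/seteqP; split => t /=.
  - move=> H i _; have [i0 [j0 [ij [E1 [E2 [Hi Hj]]]]]] := rho12 (fun i => Z i t) m1.
    have [->|ii0] := eqVneq i i0.
      by exists j0; [rewrite /= eq_sym | rewrite /= -E1 -E2].
    exists i0; first by rewrite /= eq_sym.
    apply: (le_trans _ H); rewrite E1 E2 /=.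
    have := Hi i; have := Hi j0; lra.
  - move=> H; have [i0 [j0 [ij [E1 [E2 [Hi Hj]]]]]] := rho12 (fun i => Z i t) m1.
    have [j jn Hj'] := H i0 I; rewrite E1 E2.
    have := Hj j jn. move: Hj' => /=. lra.
apply: fin_bigcap_measurable => [|i _]; first exact: finite_finset.
apply: fin_bigcup_measurable => [|j _]; first exact: finite_finset.
apply: (@mle (fun t => Z i t - Z j t) (cst u)); last exact: measurable_cst.
exact: measurable_realfun.measurable_funB.
Qed.

Lemma meas_zbar : measurable_fun setT (fun t => zbar (fun i => Z i t)).
Proof.
rewrite /zbar.
exact: (measurable_realfun.measurable_funM (measurable_sum _ (fun i => HZ i)) (measurable_cst _)).
Qed.

Lemma meas_B : measurable [set t | zbar (fun i => Z i t) <= rho 2 (fun i => Z i t)].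
Proof.
have -> : [set t | zbar (fun i => Z i t) <= rho 2 (fun i => Z i t)] =
  \bigcup_(i in [set: 'I_m]) \bigcup_(j in [set j | j != i])
    ([set t | zbar (fun i => Z i t) <= Z i t] `&` [set t | zbar (fun i => Z i t) <= Z j t]).
  apply/seteqP; split => t /=.
  - move=> H; have [i0 [j0 [ij [E1 [E2 [Hi Hj]]]]]] := rho12 (fun i => Z i t) m1.
    exists i0 => //; exists j0; first by rewrite /= eq_sym.
    rewrite E2 in H; split => //=; exact: le_trans H (Hi j0).
  - move=> [i _ [j /= ji [/= h1 h2]]].
    have [i0 [j0 [ij [E1 [E2 [Hi Hj]]]]]] := rho12 (fun i => Z i t) m1.
    rewrite E2; have [ii0|ii0] := eqVneq i i0.
      subst i0; exact: le_trans h2 (Hj j ji).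
    exact: le_trans h1 (Hj i ii0).
apply: fin_bigcup_measurable => [|i _]; first exact: finite_finset.
apply: fin_bigcup_measurable => [|j _]; first exact: finite_finset.
apply: measurableI; apply: mle => //; exact: meas_zbar.
Qed.

End Meas.

Section Rules.
Variable R : realType.

Lemma sq01 (b : bool) : ((if b then 1 else 0) : R) ^+ 2 = if b then 1 else 0.
Proof. by case: b; rewrite ?expr1n ?expr0n. Qed.

Lemma nS0 n (k : R) : 0 < k -> n%:R + k != 0.
Proof. by move=> hk; rewrite gt_eqF //; have := ler0n R n; lra. Qed.

Lemma sum_plur n : \sum_(i < n.+1) plurality R n.+1 i = 1.
Proof.
by rewrite big_ord_recl /plurality /= big1 ?addr0.
Qed.

Lemma sum_plur2 n : \sum_(i < n.+1) plurality R n.+1 i ^+ 2 = 1.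
Proof.
rewrite -(sum_plur n); apply: eq_bigr => i _; by rewrite /plurality sq01.
Qed.

Lemma sum_anti n : \sum_(i < n.+1) antiplurality R n.+1 i = n%:R.
Proof.
rewrite big_ord_recr /antiplurality /= eqxx addr0.
rewrite (eq_bigr (fun _ => 1)); first by rewrite sumr_const card_ord.
by move=> i _ /=; rewrite ltn_eqF.
Qed.

Lemma sum_anti2 n : \sum_(i < n.+1) antiplurality R n.+1 i ^+ 2 = n%:R.
Proof.
rewrite -(sum_anti n); apply: eq_bigr => i _; by rewrite /antiplurality; case: ifP; rewrite ?expr0n ?expr1n.
Qed.

Lemma sig_plur n : sigma2 (plurality R n.+1) = n%:R / (n.+1)%:R ^+ 2.
Proof.
rewrite /sigma2 /wbar sum_plur sum_plur2 -[n.+1]addn1 natrD.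
by field; rewrite nS0.
Qed.

Lemma sig_anti n : sigma2 (antiplurality R n.+1) = n%:R / (n.+1)%:R ^+ 2.
Proof.
rewrite /sigma2 /wbar sum_anti sum_anti2 -[n.+1]addn1 natrD.
by field; rewrite nS0.
Qed.

Lemma rev_sum n (F : nat -> R) : \sum_(i < n.+1) F (n - i)%N = \sum_(i < n.+1) F i.
Proof.
rewrite (reindex_inj rev_ord_inj) /=; apply: eq_bigr => i _.
by rewrite subSS subKn // -ltnS.
Qed.

Lemma sum_id n : \sum_(i < n) (i%:R : R) = n%:R * (n%:R - 1) / 2.
Proof.
elim: n => [|n IH]; first by rewrite big_ord0 !mul0r.
rewrite big_ord_recr /= IH -[n.+1]addn1 natrD; field; by rewrite ?pnatr_eq0.
Qed.

Lemma sum_sq n : \sum_(i < n) (i%:R : R) ^+ 2 = n%:R * (n%:R - 1) * (2 * n%:R - 1) / 6.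
Proof.
elim: n => [|n IH]; first by rewrite big_ord0 !mul0r.
rewrite big_ord_recr /= IH -[n.+1]addn1 natrD; field; by rewrite ?pnatr_eq0.
Qed.

Lemma sig_borda n : sigma2 (borda R n.+3) = (n%:R + 4) / (12 * (n%:R + 2)).
Proof.
rewrite /sigma2 /wbar /borda /=.
rewrite (eq_bigr (fun i : 'I_n.+3 => ((n.+2 - i)%N%:R ^+ 2) / (n.+2)%:R ^+ 2)); last first.
  by move=> i _; rewrite expr_div_n.
rewrite -!mulr_suml (rev_sum _ (fun k => (k%:R : R) ^+ 2)) (rev_sum _ (fun k => (k%:R : R))).
rewrite sum_id sum_sq -[n.+3]addn3 -[n.+2]addn2 !natrD.
by field; rewrite !nS0.
Qed.

End Rules.

From mathcomp Require Import zify.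

Section Rules2.
Variables (R : realType) (n : nat).

Lemma M_plur1 q : Mset (plurality R n.+3) q -> q.2 <= 1.
Proof.
move=> [_ [_ H]]; have := H (Ordinal (isT : (1 < n.+3)%N)) isT.
by rewrite /plurality /= mul0r subr0 mul1r add0r.
Qed.

Lemma M_plur2 : Mset (plurality R n.+3) (1, 1).
Proof.
split => //; split => // i Hi /=; rewrite /plurality /= mul0r add0r mulr1.
by case: (_ == _); rewrite ?subrr ?subr0.
Qed.

Lemma M_anti1 q : Mset (antiplurality R n.+3) q -> q.1 <= 1.
Proof.
move=> [_ [_ H]]; have := H (Ordinal (isT : (0 < n.+3)%N)) isT.
rewrite /antiplurality /=; lra.
Qed.

Lemma anti_lt (i : 'I_n.+3) : (i.+1 < n.+3)%N -> antiplurality R n.+3 i = 1.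
Proof. by move=> Hi; rewrite /antiplurality /= ltn_eqF. Qed.

Lemma anti_le1 (i : 'I_n.+3) : antiplurality R n.+3 i <= 1.
Proof. by rewrite /antiplurality; case: (_ == _). Qed.

Lemma M_anti2 : Mset (antiplurality R n.+3) (1, 1).
Proof.
split => //; split => // i Hi /=; rewrite (anti_lt Hi) subrr mul0r addr0 mulr1.
exact: anti_le1.
Qed.

Lemma M_anti3 N : 0 <= N -> Mset (antiplurality R n.+3) (0, N).
Proof.
move=> hN; split => //; split => // i Hi /=; rewrite (anti_lt Hi) subrr !mul0r mulr0 addr0.
exact: ler01.
Qed.

Lemma pos_anti : positional_rule (antiplurality R n.+3).
Proof.
rewrite /positional_rule /antiplurality /=; split => //; split.
  by move=> i ->.
split; first by move=> i ->; rewrite eqxx.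
move=> i j ij; case: eqP => hj; case: eqP => hi //=.
exfalso; apply: hj; have := ltn_ord j; lia.
Qed.

Lemma anti_neq : antiplurality R n.+3 <> plurality R n.+3.
Proof.
move=> /(congr1 (fun f => f (Ordinal (isT : (1 < n.+3)%N)))).
by rewrite /antiplurality /plurality /= => /eqP; rewrite oner_eq0.
Qed.

Definition Kb : R := (n%:R + 2) / (n%:R + 1).

Lemma borda_val (i : 'I_n.+3) : borda R n.+3 i = (n.+2 - i)%N%:R / (n%:R + 2).
Proof.
have e : (n.+2)%:R = n%:R + 2 :> R by rewrite -addn2 natrD.
by rewrite /borda /= e.
Qed.

Lemma M_borda1 q : Mset (borda R n.+3) q -> q.2 <= Kb.
Proof.
move=> [_ [_ H]]; have := H (Ordinal (leqW (leqnn n.+2))) (ltnSn n.+2).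
rewrite !borda_val /= subnn subSnn !mul0r add0r.
have hn := ler0n R n.
have -> : 1 - 1 / (n%:R + 2) = (n%:R + 1) / (n%:R + 2) :> R.
  by field; rewrite nS0.
rewrite mulrAC ler_pdivrMr ?mul1r; last by lra.
move=> h; rewrite /Kb ler_pdivlMr; last by lra.
nra.
Qed.

Lemma M_borda2 : Mset (borda R n.+3) (Kb, Kb).
Proof.
have hn := ler0n R n.
have K0 : 0 <= Kb by rewrite /Kb divr_ge0 //; lra.
split => //; split => // i Hi /=.
have Hi2 : (i < n.+2)%N := Hi.
have e1 : (n.+2 - i = (n.+1 - i).+1)%N by lia.
rewrite !borda_val /= subSS e1.
have e2 : ((n.+1 - i).+1)%:R = (n.+1 - i)%N%:R + 1 :> R by rewrite -addn1 natrD.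
rewrite e2.
have -> : (n.+1 - i)%N%:R / (n%:R + 2) * Kb + (1 - ((n.+1 - i)%N%:R + 1) / (n%:R + 2)) * Kb = 1.
  by rewrite /Kb; field; rewrite !nS0.
by [].
Qed.

Lemma sig_p_pos : 0 < sigma2 (plurality R n.+3).
Proof. by rewrite sig_plur divr_gt0 // exprn_gt0. Qed.

Lemma cw_p_pos : 0 < cw (plurality R n.+3).
Proof.
rewrite /cw mulr_gt0 // sqrtr_gt0 ?sig_p_pos // divr_gt0 //.
Qed.

Lemma cw_anti : cw (antiplurality R n.+3) = cw (plurality R n.+3).
Proof. by rewrite /cw /sigmaw sig_anti sig_plur. Qed.

Lemma cw_borda : cw (plurality R n.+3) <= cw (borda R n.+3) * Kb.
Proof.
have hn := ler0n R n.
have K0 : 0 <= Kb by rewrite /Kb divr_ge0 //; lra.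
rewrite /cw mulrAC; apply: ler_wpM2r; first exact: sqrtr_ge0.
rewrite /sigmaw -(ger0_norm K0) -sqrtr_sqr -sqrtrM; last first.
  by rewrite sig_borda divr_ge0 //; lra.
rewrite ler_sqrt; last by rewrite mulr_ge0 ?sqr_ge0 // sig_borda divr_ge0 //; lra.
rewrite sig_borda sig_plur /Kb -subr_ge0.
set x : R := n%:R.
have -> : (x + 4) / (12 * (x + 2)) * ((x + 2) / (x + 1)) ^+ 2 - (n.+2)%:R / (n.+3)%:R ^+ 2
  = (x + 2) * (x ^+ 3 - 2 * x ^+ 2 + 9 * x + 24) / (12 * (x + 1) ^+ 2 * (x + 3) ^+ 2).
  have e2 : (n.+2)%:R = x + 2 :> R by rewrite -addn2 natrD.
  have e3 : (n.+3)%:R = x + 3 :> R by rewrite -addn3 natrD.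
  rewrite e2 e3; field.
  by rewrite !nS0.
apply: divr_ge0; last by rewrite mulr_ge0 // ?sqr_ge0 // mulr_ge0 // sqr_ge0.
apply: mulr_ge0; first by lra.
have : 0 <= x * (x - 1) ^+ 2 by rewrite mulr_ge0 // sqr_ge0.
nra.
Qed.

End Rules2.

Theorem proposition12 (R : realType) (d : measure_display)
  (T : measurableType d) (P : probability T R) (m : nat)
  (Z : 'I_m -> T -> R) :
  (3 <= m)%N -> iid_std_normal P Z ->
  (exists w : 'I_m -> R, positional_rule w /\ w <> plurality R m /\
     dominates P Z w (plurality R m)) /\
  dominates P Z (antiplurality R m) (plurality R m) /\
  dominates P Z (borda R m) (plurality R m).
Proof.
move: m Z => [|[|[|n]]] Z // _ [HZ _].
have m1 : (1 < n.+3)%N by [].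
set D := fun t => rho 1 (fun i => Z i t) - rho 2 (fun i => Z i t).
have measS : forall a v : R, 0 < a -> measurable [set t | a * D t <= v].
  move=> a v ha.
  have -> : [set t | a * D t <= v] = [set t | D t <= v / a].
    by apply/funext => t /=; rewrite ler_pdivlMr // mulrC.
  exact: meas_D.
have gp : forall v, gw P Z (plurality R n.+3) v =
    P [set t | cw (plurality R n.+3) * D t <= v].
  move=> v; rewrite /gw; congr (P _); apply/funext => t /=; apply/propext.
  by rewrite (Vw_box _ _ m1 (@M_plur1 R n) (@M_plur2 R n)) mulr1.
have ga : forall v, gw P Z (antiplurality R n.+3) v =
    P ([set t | zbar (fun i => Z i t) <= rho 2 (fun i => Z i t)] `&`
       [set t | cw (plurality R n.+3) * D t <= v]).
  move=> v; rewrite /gw; congr (P _); apply/funext => t /=; apply/propext.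
  rewrite (Vw_anti _ _ m1 (@M_anti1 R n) (@M_anti2 R n) (@M_anti3 R n)) ?cw_anti //.
  exact: cw_p_pos.
have gb : forall v, gw P Z (borda R n.+3) v =
    P [set t | cw (borda R n.+3) * Kb R n * D t <= v].
  move=> v; rewrite /gw; congr (P _); apply/funext => t /=; apply/propext.
  by rewrite (Vw_box _ _ m1 (@M_borda1 R n) (@M_borda2 R n)).
have cp := @cw_p_pos R n.
have domA : dominates P Z (antiplurality R n.+3) (plurality R n.+3).
  move=> v _; rewrite ga gp; apply: le_measure; rewrite ?inE.
  - by apply: measurableI; [exact: meas_B | exact: measS].
  - exact: measS.
  - by move=> t [].
split; [|split] => //.
  by exists (antiplurality R n.+3); split; [exact: pos_anti | split; [exact: anti_neq|]].
move=> v _; rewrite gb gp; apply: le_measure; rewrite ?inE.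
- by apply: measS; apply: lt_le_trans cp (@cw_borda R n).
- exact: measS.
- move=> t /=; apply: le_trans.
  apply: ler_wpM2r; first exact: D_ge0.
  exact: cw_borda.
Qed.
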